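(* For every finite point set $S$ in the plane, the (unordered) pairs of points of $S$ can be $2$-colored such that every axis-parallel rectangle that contains at least $3$ points of $S$ contains pairs of points of $S$ of both colors.
   Context: An axis-parallel rectangle is a set $[a,b]\times[c,d]$. A rectangle contains a pair if it contains both of its points. *)

(* Defs.v *)
From HB Require Import structures.
From mathcomp Require Import all_boot all_order all_algebra.
From mathcomp Require Import reals.
Set Implicit Arguments. Unset Strict Implicit. Unset Printing Implicit Defensive.
Import Order.TTheory GRing.Theory Num.Theory.
Local Open Scope ring_scope.

Definition in_rect (R : realType) (a b c d : R) (p : R * R) : bool :=
  (a <= p.1 <= b) && (c <= p.2 <= d).

(* A 2-colouring of unordered pairs of points of S: a colour function that is
   symmetric on S. *)
Definition pair_coloring (R : realType) (S : seq (R * R))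
  (col : R * R -> R * R -> bool) : Prop :=
  forall p q, p \in S -> q \in S -> col p q = col q p.

Definition rect_has_color (R : realType) (S : seq (R * R))
  (col : R * R -> R * R -> bool) (a b c d : R) (k : bool) : Prop :=
  exists p q, [/\ p \in S, q \in S, p != q,
                  in_rect a b c d p && in_rect a b c d q & col p q = k].

(* Main.v *)
Require Import Defs.
From HB Require Import structures.
From mathcomp Require Import all_boot all_order all_algebra.
From mathcomp Require Import reals.
From mathcomp Require Import zify.
Import Order.TTheory GRing.Theory Num.Theory.
Set Implicit Arguments. Unset Strict Implicit.
Local Open Scope ring_scope.

Section Abs.
End Abs.

Definition btw (T : Type) (lt : rel T) (r p q : T) : bool :=
  (lt p r && lt r q) || (lt q r && lt r p).

Lemma asymL (T : Type) (lt : rel T) (Hirr : forall u, ~~ lt u u)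
  (Htr : forall v u w, lt u v -> lt v w -> lt u w) u v :
  lt u v -> lt v u = false.
Proof. move=> h; apply/negP => h'; by move: (Hirr u); rewrite (Htr _ _ _ h h'). Qed.

Lemma btw_l (T : Type) (lt : rel T) (Hirr : forall u, ~~ lt u u)
  (Htr : forall v u w, lt u v -> lt v w -> lt u w) r p q :
  btw lt r p q -> lt p r = lt p q /\ lt r q = lt p q.
Proof.
case/orP=> /andP[h1 h2].
  by rewrite h1 h2 (Htr _ _ _ h1 h2).
have hqp := Htr _ _ _ h1 h2.
by rewrite (asymL Hirr Htr h2) (asymL Hirr Htr h1) (asymL Hirr Htr hqp).
Qed.

Lemma btw_trans (T : Type) (lt : rel T) (Hirr : forall u, ~~ lt u u)
  (Htr : forall v u w, lt u v -> lt v w -> lt u w) s r p q :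
  btw lt s p r -> btw lt r p q -> btw lt s p q.
Proof.
rewrite /btw.
case/orP=> /andP[h1 h2]; case/orP=> /andP[h3 h4].
- by rewrite h1 (Htr _ _ _ h2 h4).
- by move: (Hirr p); rewrite (Htr _ _ _ (Htr _ _ _ h1 h2) h4).
- by move: (Hirr p); rewrite (Htr _ _ _ h3 (Htr _ _ _ h1 h2)).
- by rewrite h2 (Htr _ _ _ h3 h1) orbT.
Qed.

Lemma btw_self (T : Type) (lt : rel T) (Hirr : forall u, ~~ lt u u) r p :
  btw lt r p r = false.
Proof. by rewrite /btw (negbTE (Hirr r)) andbF. Qed.

Lemma btw_neq (T : eqType) (lt : rel T) (Hirr : forall u, ~~ lt u u) r p q :
  btw lt r p q -> p != r.
Proof.
by apply: contraTneq => ->; rewrite /btw (negbTE (Hirr r)) andbF.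
Qed.

Lemma btw_sym (T : Type) (lt : rel T) r p q : btw lt r p q = btw lt r q p.
Proof. by rewrite /btw orbC. Qed.

Lemma lt_neg (T : eqType) (lt : rel T) (Hirr : forall u, ~~ lt u u)
  (Htr : forall v u w, lt u v -> lt v w -> lt u w)
  (Htot : forall u v, u != v -> lt u v || lt v u) p q :
  p != q -> lt q p = ~~ lt p q.
Proof.
move=> /Htot; case h: (lt p q) => /= h'; last by [].
by rewrite (asymL Hirr Htr h).
Qed.

Lemma middle (T : eqType) (lt : rel T) (Hirr : forall u, ~~ lt u u)
  (Htr : forall v u w, lt u v -> lt v w -> lt u w)
  (Htot : forall u v, u != v -> lt u v || lt v u) u v w :
  u != v -> u != w -> v != w ->
  [|| btw lt u v w, btw lt v u w | btw lt w u v].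
Proof.
move=> uv uw vw.
have Nvu := lt_neg Hirr Htr Htot uv.
have Nwu := lt_neg Hirr Htr Htot uw.
have Nwv := lt_neg Hirr Htr Htot vw.
rewrite /btw Nvu Nwu Nwv.
by case Huv: (lt u v); case Huw: (lt u w); case Hvw: (lt v w).
Qed.

Definition lexlt (R : realType) (u v : R * R) : bool :=
  (u.1 < v.1) || ((u.1 == v.1) && (u.2 < v.2)).
Definition sw (R : realType) (u : R * R) : R * R := (u.2, u.1).
Definition ltx (R : realType) (p q : R * R) := lexlt p q.
Definition lty (R : realType) (p q : R * R) := lexlt (sw p) (sw q).

Lemma lexlt_irr (R : realType) (u : R * R) : ~~ lexlt u u.
Proof. by rewrite /lexlt !ltxx andbF. Qed.

Lemma lexlt_trans (R : realType) (v u w : R * R) :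
  lexlt u v -> lexlt v w -> lexlt u w.
Proof.
rewrite /lexlt => /orP[h1|/andP[/eqP e1 h1]] /orP[h2|/andP[/eqP e2 h2]].
- by rewrite (lt_trans h1 h2).
- by rewrite -e2 h1.
- by rewrite e1 h2.
- by rewrite e1 e2 eqxx (lt_trans h1 h2) orbT.
Qed.

Lemma lexlt_tot (R : realType) (u v : R * R) : u != v -> lexlt u v || lexlt v u.
Proof.
case: u v => [a b] [c d] /=; rewrite /lexlt /=.
case: (ltgtP a c) => //= e; subst.
by case: (ltgtP b d) => // ->; rewrite eqxx.
Qed.

Lemma lexlt_le1 (R : realType) (u v : R * R) : lexlt u v -> u.1 <= v.1.
Proof. by case/orP=> [/ltW //|/andP[/eqP -> _]]. Qed.

Lemma ltx_irr (R : realType) (u : R * R) : ~~ ltx u u.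
Proof. exact: lexlt_irr. Qed.
Lemma lty_irr (R : realType) (u : R * R) : ~~ lty u u.
Proof. exact: lexlt_irr. Qed.
Lemma ltx_trans (R : realType) (v u w : R * R) : ltx u v -> ltx v w -> ltx u w.
Proof. exact: lexlt_trans. Qed.
Lemma lty_trans (R : realType) (v u w : R * R) : lty u v -> lty v w -> lty u w.
Proof. exact: lexlt_trans. Qed.
Lemma ltx_tot (R : realType) (u v : R * R) : u != v -> ltx u v || ltx v u.
Proof. exact: lexlt_tot. Qed.
Lemma lty_tot (R : realType) (u v : R * R) : u != v -> lty u v || lty v u.
Proof.
move=> uv; apply: lexlt_tot; apply: contra uv.
by case: u v => [a b] [c d]; rewrite /sw /= !xpair_eqE andbC.
Qed.

Definition between (R : realType) (r p q : R * R) : bool :=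
  btw (@ltx R) r p q && btw (@lty R) r p q.
Definition inc (R : realType) (p q : R * R) : bool := ltx p q == lty p q.
Definition nonempty (R : realType) (S : seq (R * R)) (p q : R * R) : bool :=
  has (fun r => between r p q) S.
Definition colr (R : realType) (S : seq (R * R)) (p q : R * R) : bool :=
  inc p q != nonempty S p q.

Lemma between_rect (R : realType) (a b c d : R) r p q :
  between r p q -> in_rect a b c d p -> in_rect a b c d q -> in_rect a b c d r.
Proof.
case/andP=> hx hy; rewrite /in_rect.
move=> /andP[/andP[p1 p2] /andP[p3 p4]] /andP[/andP[q1 q2] /andP[q3 q4]].
have r12 : a <= r.1 <= b.
  case/orP: hx => /andP[/lexlt_le1 h1 /lexlt_le1 h2].
    by rewrite (le_trans p1 h1) (le_trans h2 q2).
  by rewrite (le_trans q1 h1) (le_trans h2 p2).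
have : c <= r.2 <= d.
  case/orP: hy => /andP[/lexlt_le1 h1 /lexlt_le1 h2]; rewrite /sw /= in h1 h2.
    by rewrite (le_trans p3 h1) (le_trans h2 q4).
  by rewrite (le_trans q3 h1) (le_trans h2 p4).
by move=> ->; rewrite r12.
Qed.

Lemma count_lt_sub (T : eqType) (P Q : pred T) (s : seq T) x0 :
  (forall x, P x -> Q x) -> x0 \in s -> Q x0 -> ~~ P x0 ->
  (count P s < count Q s)%N.
Proof.
move=> PQ; elim: s => [|y s IH] //=; rewrite in_cons => /orP[/eqP <-|xs] Qx Px.
  rewrite (negbTE Px) Qx add0n add1n ltnS.
  by apply: sub_count.
have := IH xs Qx Px.
by case Py: (P y); [rewrite (PQ _ Py)|case: (Q y)] => /=; lia.
Qed.

Lemma inc_sym (R : realType) (p q : R * R) : inc p q = inc q p.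
Proof.
have [->|pq] := eqVneq p q; first by [].
rewrite /inc (lt_neg (@ltx_irr R) (@ltx_trans R) (@ltx_tot R) pq).
rewrite (lt_neg (@lty_irr R) (@lty_trans R) (@lty_tot R) pq).
by case: (ltx p q); case: (lty p q).
Qed.

Lemma nonempty_sym (R : realType) S (p q : R * R) :
  nonempty S p q = nonempty S q p.
Proof. by apply: eq_has => r; rewrite /between btw_sym [btw (@lty R) _ _ _]btw_sym. Qed.

Lemma between_l (R : realType) (r p q : R * R) :
  between r p q -> inc p r = inc p q.
Proof.
case/andP=> hx hy.
have [e1 _] := btw_l (@ltx_irr R) (@ltx_trans R) hx.
have [e2 _] := btw_l (@lty_irr R) (@lty_trans R) hy.
by rewrite /inc e1 e2.
Qed.

Lemma between_trans (R : realType) (s r p q : R * R) :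
  between s p r -> between r p q -> between s p q.
Proof.
case/andP=> h1 h2 /andP[h3 h4].
by rewrite /between (btw_trans (@ltx_irr R) (@ltx_trans R) h1 h3)
  (btw_trans (@lty_irr R) (@lty_trans R) h2 h4).
Qed.

Lemma minimize (R : realType) (S : seq (R * R)) (a b c d : R) n :
  forall p q, p \in S -> q \in S -> p != q ->
  in_rect a b c d p -> in_rect a b c d q ->
  (count (fun r => between r p q) S <= n)%N ->
  exists p' q', [/\ p' \in S, q' \in S, p' != q',
     in_rect a b c d p' && in_rect a b c d q' &
     inc p' q' = inc p q /\ ~~ nonempty S p' q'].
Proof.
elim: n => [|n IH] p q pS qS pq rp rq hc.
  exists p, q; split => //; first by rewrite rp rq.
  split => //; apply/negP => /hasP[r rS br].
  by move: hc; rewrite -(count_pred0 S) leqNgt => /negP; apply;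
     apply: (count_lt_sub (x0 := r)).
case ne: (nonempty S p q).
  move/hasP: ne => [r rS br].
  have pr : p != r by case/andP: br => /(btw_neq (@ltx_irr R)).
  have rr := between_rect br rp rq.
  have hlt : (count (fun s => between s p r) S <
              count (fun s => between s p q) S)%N.
    apply: (count_lt_sub (x0 := r)) => //.
      by move=> s hs; apply: between_trans hs br.
    by rewrite /between btw_self //; apply: ltx_irr.
  have [p' [q' [H1 H2 H3 H4 [H5 H6]]]] := IH p r pS rS pr rp rr
    (leq_trans hlt hc : (_ <= n)%N).
  exists p', q'; split => //; split => //.
  by rewrite H5 (between_l br).
exists p, q; split => //; first by rewrite rp rq.
by rewrite ne.
Qed.

Lemma from_inc (R : realType) (S : seq (R * R)) (a b c d : R) p q :
  p \in S -> q \in S -> p != q ->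
  in_rect a b c d p -> in_rect a b c d q ->
  rect_has_color S (colr S) a b c d (inc p q).
Proof.
move=> pS qS pq rp rq.
have [p' [q' [H1 H2 H3 H4 [H5 H6]]]] := minimize pS qS pq rp rq (leqnn _).
rewrite /rect_has_color; exists p', q'; split => //.
rewrite /colr H5 (negbTE H6).
by case: (inc p q).
Qed.

Lemma mid_between (R : realType) (u m v : R * R) (β : bool) :
  btw (@ltx R) m u v -> inc u m = β -> inc m v = β -> btw (@lty R) m u v.
Proof.
move=> h.
have um := btw_neq (@ltx_irr R) h.
have mv : m != v by rewrite eq_sym; move: h; rewrite btw_sym => /(btw_neq (@ltx_irr R)).
have [e1 e2] := btw_l (@ltx_irr R) (@ltx_trans R) h.
rewrite /btw /inc e1 e2.
rewrite (lt_neg (@lty_irr R) (@lty_trans R) (@lty_tot R) mv).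
rewrite (lt_neg (@lty_irr R) (@lty_trans R) (@lty_tot R) um).
by case: (ltx u v); case: (lty u m); case: (lty m v); case: β.
Qed.

Lemma final (R : realType) (S : seq (R * R)) (a b c d : R) u m v (β : bool) :
  u \in S -> m \in S -> v \in S -> u != v ->
  in_rect a b c d u -> in_rect a b c d v ->
  btw (@ltx R) m u v -> inc u m = β -> inc m v = β -> inc u v = β ->
  rect_has_color S (colr S) a b c d (~~ β).
Proof.
move=> uS mS vS uv ru rv h e1 e2 e3.
have bm : between m u v by rewrite /between h (mid_between h e1 e2).
rewrite /rect_has_color; exists u, v; split => //; first by rewrite ru rv.
rewrite /colr e3.
have -> : nonempty S u v by apply/hasP; exists m.
by case: β in e1 e2 e3 *.
Qed.

Theorem theorem10 (R : realType) (S : seq (R * R)) (HS : uniq S) :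
  exists col : R * R -> R * R -> bool,
    pair_coloring S col /\
    forall a b c d : R,
      (3 <= count (in_rect a b c d) S)%N ->
      rect_has_color S col a b c d true /\ rect_has_color S col a b c d false.
Proof.
exists (colr S); split.
  by move=> p q _ _; rewrite /colr inc_sym nonempty_sym.
move=> a b c d h3.
have us : uniq (filter (in_rect a b c d) S) by rewrite filter_uniq.
have mS : forall x, x \in filter (in_rect a b c d) S ->
    x \in S /\ in_rect a b c d x.
  by move=> x; rewrite mem_filter => /andP[].
move: h3 us mS; rewrite -size_filter.
case: (filter _ _) => [|x [|y [|z s]]] //= _.
rewrite !in_cons !negb_or => /andP[/and3P[xy xz _] /andP[/andP[yz _] _]] mS.
have [xS rx] : x \in S /\ in_rect a b c d x by apply: mS; rewrite !in_cons eqxx.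
have [yS ry] : y \in S /\ in_rect a b c d y by apply: mS; rewrite !in_cons eqxx orbT.
have [zS rz] : z \in S /\ in_rect a b c d z by apply: mS; rewrite !in_cons eqxx !orbT.
suff : rect_has_color S (colr S) a b c d (~~ inc x y).
  have := from_inc xS yS xy rx ry.
  by case: (inc x y) => h1 h2; split.
case exz: (inc x z == inc x y).
  case eyz: (inc y z == inc x y).
    move/eqP: exz => exz; move/eqP: eyz => eyz.
    have := middle (@ltx_irr R) (@ltx_trans R) (@ltx_tot R) xy xz yz.
    case/or3P => hm.
    - apply: (final yS xS zS yz ry rz hm) => //.
      by rewrite inc_sym.
    - exact: (final xS yS zS xz rx rz hm).
    - apply: (final xS zS yS xy rx ry hm) => //.
      by rewrite inc_sym.
  have := from_inc yS zS yz ry rz.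
  by case: (inc y z) (inc x y) eyz => [] [].
have := from_inc xS zS xz rx rz.
by case: (inc x z) (inc x y) exz => [] [].
Qed.
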